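(* For tasks $m=1,\ldots,T$, let $L(w_{m0},\bm{w}_m)$ be a differentiable loss (the negative log-likelihood of a generalized linear model with intercept $w_{m0}\in\mathbb{R}$ and coefficient vector $\bm{w}_m\in\mathbb{R}^p$ fitted to data of size $n_m$). Let $\mathcal{E}$ be a set of task pairs with weights $r_{m_1,m_2}\ge0$, let $\lambda_1>0$, $\lambda_2,\lambda_3\ge0$, $\gamma$ be fixed, and let $P(\cdot;\lambda,\gamma)$ be a (possibly non-convex) group penalty with associated group-thresholding function $\bm{\Theta}(\cdot;\lambda,\gamma)$; set $\bm{\psi}(\bm{o};\lambda,\gamma)=\bm{o}-\bm{\Theta}(\bm{o};\lambda,\gamma)$. Define $$L^{\mathrm{MR}}(\bm{w}_0,W,U,O)=\sum_{m=1}^T\frac{1}{n_m}L(w_{m0},\bm{w}_m)+\frac{\lambda_1}{2}\sum_{m=1}^T\|\bm{w}_m-\bm{u}_m-\bm{o}_m\|_2^2+\lambda_2\sum_{(m_1,m_2)\in\mathcal{E}}r_{m_1,m_2}\|\bm{u}_{m_1}-\bm{u}_{m_2}\|_2+\sum_{m=1}^T P(\bm{o}_m;\lambda_3,\gamma),$$ with $\bm w_0=(w_{10},\dots,w_{T0})^\top$, $W=(\bm{w}_1,\ldots,\bm{w}_T)^\top$, $U=(\bm{u}_1,\ldots,\bm{u}_T)^\top$, $O=(\bm{o}_1,\ldots,\bm{o}_T)^\top$. Suppose $(\widehat{\bm{w}}_0,\widehat W,\widehat U,\widehat O)$ is a convergence (fixed) point of the block coordinate descent scheme that cyclically minimizes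 $L^{\mathrm{MR}}$ over $(\bm{w}_0,W)$, then over $U$, then updates $O$; precisely, assume (i) for each $m$, $(\widehat w_{m0},\widehat{\bm{w}}_m)\in\arg\min_{w_{m0},\bm{w}_m}\{\frac1{n_m}L(w_{m0},\bm{w}_m)+\frac{\lambda_1}{2}\|\bm{w}_m-\widehat{\bm{u}}_m-\widehat{\bm{o}}_m\|_2^2\}$; (ii) $\widehat U\in\arg\min_U L^{\mathrm{MR}}(\widehat{\bm{w}}_0,\widehat W,U,\widehat O)$; (iii) $\widehat{\bm{o}}_m=\bm{\Theta}(\widehat{\bm{w}}_m-\widehat{\bm{u}}_m;\lambda_3/\lambda_1,\gamma)$ for each $m$. Then, writing $\bm{w}_m'=(w_{m0},\bm{w}_m^\top)^\top$, $$\nabla_{\bm{w}_m'}\Big(\frac{1}{n_m}L(w_{m0},\bm{w}_m)\Big)\Big|_{\bm{w}_m'=\widehat{\bm{w}}_m'}+\lambda_1\begin{pmatrix}0\\ \bm{\psi}(\widehat{\bm{w}}_m-\widehat{\bm{u}}_m;\lambda_3/\lambda_1,\gamma)\end{pmatrix}=\bm{0},\quad m=1,\ldots,T,$$ and $$\bm{0}\in-\lambda_1\Psi(\widehat W-\widehat U;\lambda_3/\lambda_1,\gamma)+\lambda_2\,\partial g(\widehat U),$$ where $g(U)=\sum_{(m_1,m_2)\in\mathcal{E}}r_{m_1,m_2}\|\bm{u}_{m_1}-\bm{u}_{m_2}\|_2$ as a function of $\mathrm{vec}(U)=(\bm{u}_1^\top,\ldots,\bm{u}_T^\top)^\top$,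 $\partial g$ is its convex subdifferential, and $\Psi(\widehat W-\widehat U;\lambda,\gamma)=(\bm{\psi}(\widehat{\bm{w}}_1-\widehat{\bm{u}}_1;\lambda,\gamma)^\top,\ldots,\bm{\psi}(\widehat{\bm{w}}_T-\widehat{\bm{u}}_T;\lambda,\gamma)^\top)^\top$.
   Context: The group-thresholding function associated with the penalty $P$ is the map $\bm{\Theta}(\bm{z};\lambda,\gamma)$ giving the minimizer of $\tfrac12\|\bm{z}-\bm{o}\|_2^2+P(\bm{o};\lambda,\gamma)$ over $\bm{o}\in\mathbb{R}^p$ (e.g. for group lasso $\bm\Theta(\bm z;\lambda)=\max(0,1-\lambda/\|\bm z\|_2)\bm z$). The function $g$ equals $\|D\,\mathrm{vec}(U)\|_{2,1}$ with $D=A_r\otimes I_p$, $A_r$ the $|\mathcal{E}|\times T$ matrix whose row for $(m_1,m_2)$ is $r_{m_1,m_2}$ times the vector with $+1$ at $m_1$, $-1$ at $m_2$, zeros elsewhere, and $\|\cdot\|_{2,1}$ the sum of Euclidean norms of consecutive length-$p$ blocks. *)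

(* Defs.v *)
From HB Require Import structures.
From mathcomp Require Import all_boot all_order all_algebra.
From mathcomp Require Import all_classical all_reals all_analysis.
Set Implicit Arguments.
Unset Strict Implicit.
Unset Printing Implicit Defensive.
Import Order.TTheory GRing.Theory Num.Theory.
Import numFieldNormedType.Exports.
Local Open Scope ring_scope.

Section MTL.
Variable R : realType.

Definition dotv (k : nat) (u v : 'rV[R]_k) : R := \sum_(i < k) u 0 i * v 0 i.
Definition norm2 (k : nat) (v : 'rV[R]_k) : R := Num.sqrt (dotv v v).

Definition subdiff (k : nat) (f : 'rV[R]_k -> R) (x : 'rV[R]_k) : set 'rV[R]_k :=
  [set v | forall y, f x + dotv v (y - x) <= f y].

Definition psi (p : nat) (Theta : 'rV[R]_p -> R -> R -> 'rV[R]_p)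
  (o : 'rV[R]_p) (lam gam : R) : 'rV[R]_p := o - Theta o lam gam.

Definition Psi (T p : nat) (Theta : 'rV[R]_p -> R -> R -> 'rV[R]_p)
  (W U : 'M[R]_(T, p)) (lam gam : R) : 'rV[R]_(T * p) :=
  mxvec (\matrix_(m < T) psi Theta (row m W - row m U) lam gam).

Definition gfus (T p : nat) (E : {set 'I_T * 'I_T}) (r : 'I_T -> 'I_T -> R)
  (U : 'M[R]_(T, p)) : R :=
  \sum_(e in E) r e.1 e.2 * norm2 (row e.1 U - row e.2 U).

(* g as a function of vec(U) = (u_1^T, ..., u_T^T)^T *)
Definition gvec (T p : nat) (E : {set 'I_T * 'I_T}) (r : 'I_T -> 'I_T -> R)
  (x : 'rV[R]_(T * p)) : R := gfus E r (vec_mx x : 'M[R]_(T, p)).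

Definition LMR (T p : nat) (L : 'I_T -> R * 'rV[R]_p -> R) (n : 'I_T -> nat)
  (E : {set 'I_T * 'I_T}) (r : 'I_T -> 'I_T -> R)
  (P : 'rV[R]_p -> R -> R -> R) (lam1 lam2 lam3 gam : R)
  (w0 : 'I_T -> R) (W U O : 'M[R]_(T, p)) : R :=
  \sum_(m < T) (n m)%:R^-1 * L m (w0 m, row m W)
  + lam1 / 2 * \sum_(m < T) norm2 (row m W - row m U - row m O) ^+ 2
  + lam2 * gfus E r U
  + \sum_(m < T) P (row m O) lam3 gam.

End MTL.

(* Main.v *)
Require Import Defs.
From HB Require Import structures.
From mathcomp Require Import all_boot all_order all_algebra.
From mathcomp Require Import all_classical all_reals all_analysis.
From mathcomp Require Import ring lra.
Import Order.TTheory GRing.Theory Num.Theory.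
Import numFieldNormedType.Exports.
Local Open Scope ring_scope.
Set Implicit Arguments. Unset Strict Implicit.

Section Aux.
Variable R : realType.
Implicit Types (k : nat).

Lemma dotvC k (u v : 'rV[R]_k) : dotv u v = dotv v u.
Proof. by rewrite /dotv; apply: eq_bigr => i _; rewrite mulrC. Qed.

Lemma dotvDl k (u v w : 'rV[R]_k) : dotv (u + v) w = dotv u w + dotv v w.
Proof. by rewrite /dotv -big_split; apply: eq_bigr => i _; rewrite mxE mulrDl. Qed.

Lemma dotvZl k (a : R) (u w : 'rV[R]_k) : dotv (a *: u) w = a * dotv u w.
Proof. by rewrite /dotv mulr_sumr; apply: eq_bigr => i _; rewrite mxE mulrA. Qed.

Lemma dotvNl k (u w : 'rV[R]_k) : dotv (- u) w = - dotv u w.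
Proof. by rewrite -scaleN1r dotvZl mulN1r. Qed.

Lemma dotvBl k (u v w : 'rV[R]_k) : dotv (u - v) w = dotv u w - dotv v w.
Proof. by rewrite dotvDl dotvNl. Qed.

Lemma dotvDr k (u v w : 'rV[R]_k) : dotv w (u + v) = dotv w u + dotv w v.
Proof. by rewrite dotvC dotvDl !(dotvC w). Qed.
Lemma dotvZr k (a : R) (u w : 'rV[R]_k) : dotv w (a *: u) = a * dotv w u.
Proof. by rewrite dotvC dotvZl dotvC. Qed.
Lemma dotvBr k (u v w : 'rV[R]_k) : dotv w (u - v) = dotv w u - dotv w v.
Proof. by rewrite dotvC dotvBl !(dotvC w). Qed.
Lemma dotv0l k (w : 'rV[R]_k) : dotv 0 w = 0.
Proof. by rewrite /dotv big1 // => i _; rewrite mxE mul0r. Qed.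

Lemma dotv_ge0 k (u : 'rV[R]_k) : 0 <= dotv u u.
Proof. by rewrite /dotv; apply: sumr_ge0 => i _; rewrite -expr2 sqr_ge0. Qed.

Lemma dotv_eq0 k (u : 'rV[R]_k) : dotv u u = 0 -> u = 0.
Proof.
move=> /eqP; rewrite /dotv psumr_eq0; last by move=> i _; rewrite -expr2 sqr_ge0.
move=> /allP H; apply/rowP => i; rewrite mxE.
have := H i (mem_index_enum i); rewrite /= -expr2 sqrf_eq0 => /eqP //.
Qed.

Lemma norm2_sq k (u : 'rV[R]_k) : norm2 u ^+ 2 = dotv u u.
Proof. by rewrite /norm2 sqr_sqrtr // dotv_ge0. Qed.

Lemma norm2_ge0 k (u : 'rV[R]_k) : 0 <= norm2 u.
Proof. exact: sqrtr_ge0. Qed.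

Lemma CS k (a b : 'rV[R]_k) : dotv a b <= norm2 a * norm2 b.
Proof.
have [b0|bn0] := eqVneq (dotv b b) 0.
  rewrite (dotv_eq0 b0) dotvC dotv0l; apply: mulr_ge0; exact: norm2_ge0.
have bp : 0 < dotv b b by rewrite lt_def bn0 dotv_ge0.
pose s := - (dotv a b / dotv b b).
have H := dotv_ge0 (a + s *: b).
rewrite !(dotvDl, dotvDr, dotvZl, dotvZr) (dotvC b a) in H.
have H2 : dotv a b ^+ 2 <= dotv a a * dotv b b.
  have : 0 <= dotv a a * dotv b b - dotv a b ^+ 2.
    have -> : dotv a a * dotv b b - dotv a b ^+ 2 =
       dotv b b * (dotv a a + s * dotv a b + (s * dotv a b + s * (s * dotv b b))).
        rewrite /s; field. exact: bn0.
    by apply: mulr_ge0 => //; exact: ltW.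
  by rewrite subr_ge0.
have na := norm2_ge0 a; have nb := norm2_ge0 b.
rewrite -!norm2_sq -exprMn in H2.
have [ab0|ab0] := leP (dotv a b) 0.
  by apply: (le_trans ab0); apply: mulr_ge0.
by rewrite -(ler_pXn2r (_ : 0 < 2)%N) // ?nnegrE ?mulr_ge0 // ltW.
Qed.

Lemma norm2_tri k (a b : 'rV[R]_k) : norm2 (a + b) <= norm2 a + norm2 b.
Proof.
have na := norm2_ge0 a; have nb := norm2_ge0 b.
rewrite -(ler_pXn2r (_ : 0 < 2)%N) ?nnegrE ?addr_ge0 ?norm2_ge0 //.
rewrite norm2_sq !(dotvDl, dotvDr) (dotvC b a) sqrrD -!norm2_sq.
have := CS a b; lra.
Qed.

Lemma norm2Z k (c : R) (a : 'rV[R]_k) : norm2 (c *: a) = `|c| * norm2 a.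
Proof.
rewrite /norm2 dotvZl dotvZr mulrA -expr2 sqrtrM ?sqr_ge0 //.
by rewrite sqrtr_sqr.
Qed.

Lemma row_comb T p (U Y : 'M[R]_(T, p)) (t : R) (i j : 'I_T) :
  row i (U + t *: (Y - U)) - row j (U + t *: (Y - U)) =
  (1 - t) *: (row i U - row j U) + t *: (row i Y - row j Y).
Proof. by apply/rowP => k; rewrite !mxE; ring. Qed.

Lemma gfus_convex T p (E : {set 'I_T * 'I_T}) (r : 'I_T -> 'I_T -> R)
  (U Y : 'M[R]_(T, p)) (t : R) :
  (forall e, e \in E -> 0 <= r e.1 e.2) -> 0 <= t <= 1 ->
  gfus E r (U + t *: (Y - U)) <= (1 - t) * gfus E r U + t * gfus E r Y.
Proof.
move=> Hr /andP[t0 t1]; rewrite /gfus !mulr_sumr -big_split /=.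
apply: ler_sum => e He; rewrite row_comb.
apply: le_trans (ler_wpM2l (Hr e He) (norm2_tri _ _)) _.
rewrite !norm2Z !ger0_norm ?subr_ge0 //; rewrite le_eqVlt; apply/orP; left; apply/eqP; ring.
Qed.

Definition frob T p (A B : 'M[R]_(T, p)) := \sum_(m < T) dotv (row m A) (row m B).

Lemma dotv_mxvec T p (A B : 'M[R]_(T, p)) : dotv (mxvec A) (mxvec B) = frob A B.
Proof.
rewrite /dotv /frob (reindex (uncurry (@mxvec_index T p))) /=; last exact: curry_mxvec_bij.
transitivity (\sum_(ij : 'I_T * 'I_p) A ij.1 ij.2 * B ij.1 ij.2).
  by apply: eq_bigr => -[i j] _; rewrite /= !mxvecE.
rewrite -(pair_bigA _ (fun i j => A i j * B i j)) /=; apply: eq_bigr => i _; apply: eq_bigr => j _; by rewrite !mxE.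
Qed.

Lemma small_t (a b c : R) : 0 <= b -> (forall t, 0 < t <= 1 -> a <= c + t * b) -> a <= c.
Proof.
move=> b0 H; rewrite leNgt; apply/negP => ca.
pose d := a - c.
have d0 : 0 < d by rewrite subr_gt0.
pose t := d / (b + d).
have bd : 0 < b + d by lra.
have t0 : 0 < t by apply: divr_gt0.
have t1 : t <= 1 by rewrite ler_pdivrMr // mul1r; lra.
have := H t; rewrite t0 t1 => /(_ isT).
have : t * b < d.
  rewrite /t mulrAC ltr_pdivrMr //; nra.
rewrite /d; lra.
Qed.

Lemma frobE T p (A B : 'M[R]_(T, p)) : frob A B = \sum_i \sum_j A i j * B i j.
Proof. by apply: eq_bigr => i _; apply: eq_bigr => j _; rewrite !mxE. Qed.

Lemma sum_delta T (a : 'I_T) (W : 'I_T -> R) : \sum_i (i == a)%:R * W i = W a.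
Proof.
rewrite (bigD1 a) //= eqxx mul1r big1 ?addr0 // => i /negbTE ->; by rewrite mul0r.
Qed.

Definition sgn_e T p (U : 'M[R]_(T, p)) (e : 'I_T * 'I_T) : 'rV[R]_p :=
  (norm2 (row e.1 U - row e.2 U))^-1 *: (row e.1 U - row e.2 U).

Definition Me T p (U : 'M[R]_(T, p)) (e : 'I_T * 'I_T) : 'M[R]_(T, p) :=
  \matrix_(i, j) (((i == e.1)%:R - (i == e.2)%:R) * sgn_e U e 0 j).

Lemma frob_Me T p (U Z : 'M[R]_(T, p)) e :
  frob (Me U e) Z = dotv (sgn_e U e) (row e.1 Z - row e.2 Z).
Proof.
rewrite frobE dotvBr.
transitivity (\sum_i ((i == e.1)%:R - (i == e.2)%:R) * dotv (sgn_e U e) (row i Z)).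
  apply: eq_bigr => i _; rewrite /dotv mulr_sumr; apply: eq_bigr => j _.
  by rewrite !mxE -mulrA.
under eq_bigr => i _ do rewrite mulrBl.
by rewrite sumrB !sum_delta.
Qed.

Lemma edge_ineq k (a b : 'rV[R]_k) :
  norm2 a + dotv ((norm2 a)^-1 *: a) (b - a) <= norm2 b.
Proof.
have [a0|an0] := eqVneq (norm2 a) 0.
  by rewrite a0 invr0 scale0r dotv0l addr0 norm2_ge0.
rewrite dotvBr !dotvZl -norm2_sq expr2 mulrA mulVf // mul1r.
have := CS ((norm2 a)^-1 *: a) b; rewrite norm2Z ger0_norm ?invr_ge0 ?norm2_ge0 //.
rewrite mulVf // mul1r dotvZl; lra.
Qed.

Lemma subgrad_exists T p (E : {set 'I_T * 'I_T}) (r : 'I_T -> 'I_T -> R)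
  (U : 'M[R]_(T, p)) :
  (forall e, e \in E -> 0 <= r e.1 e.2) ->
  exists V : 'M[R]_(T, p), forall Y, gfus E r U + frob V (Y - U) <= gfus E r Y.
Proof.
move=> Hr; exists (\sum_(e in E) r e.1 e.2 *: Me U e) => Y.
have -> : frob (\sum_(e in E) r e.1 e.2 *: Me U e) (Y - U) =
    \sum_(e in E) r e.1 e.2 * frob (Me U e) (Y - U).
  rewrite frobE.
  under eq_bigr => i _ do under eq_bigr => j _ do rewrite summxE mulr_suml.
  under eq_bigr => i _ do rewrite exchange_big /=.
  rewrite exchange_big /=; apply: eq_bigr => e _.
  rewrite frobE mulr_sumr; apply: eq_bigr => i _; rewrite mulr_sumr.
  by apply: eq_bigr => j _; rewrite mxE mulrA.
rewrite /gfus -big_split /=; apply: ler_sum => e He.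
rewrite frob_Me -mulrDr; apply: ler_wpM2l; first exact: Hr.
have -> : row e.1 (Y - U) - row e.2 (Y - U) =
   (row e.1 Y - row e.2 Y) - (row e.1 U - row e.2 U).
  by apply/rowP => j; rewrite !mxE; ring.
exact: edge_ineq.
Qed.

Lemma rowWUt T p (Wh Uh Oh Y : 'M[R]_(T, p)) (t : R) m :
  row m Wh - row m (Uh + t *: (Y - Uh)) - row m Oh =
  row m (Wh - Uh - Oh) - t *: row m (Y - Uh).
Proof. by apply/rowP => j; rewrite !mxE; ring. Qed.

Lemma quad_exp k (d e : 'rV[R]_k) (t : R) :
  norm2 (d - t *: e) ^+ 2 = dotv d d - 2 * t * dotv d e + t ^+ 2 * dotv e e.
Proof.
rewrite norm2_sq !(dotvBl, dotvBr, dotvZl, dotvZr) (dotvC e d); ring.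
Qed.

Lemma ident1 (t lam1 lam2 q gy gu f b : R) :
  t * (lam2 * (gy - gu) + t * (lam1 / 2 * b) - lam1 * f) =
  lam1 / 2 * (q - 2 * t * f + t ^+ 2 * b) + lam2 * ((1 - t) * gu + t * gy) -
  (lam1 / 2 * q + lam2 * gu).
Proof. field. by []. Qed.

Lemma part2 T p (L : 'I_T -> R * 'rV[R]_p -> R) (n : 'I_T -> nat)
  (E : {set 'I_T * 'I_T}) (r : 'I_T -> 'I_T -> R)
  (P : 'rV[R]_p -> R -> R -> R) (Theta : 'rV[R]_p -> R -> R -> 'rV[R]_p)
  (lam1 lam2 lam3 gam : R)
  (w0h : 'I_T -> R) (Wh Uh Oh : 'M[R]_(T, p))
  (Hr : forall e, e \in E -> 0 <= r e.1 e.2)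
  (Hlam1 : 0 < lam1) (Hlam2 : 0 <= lam2)
  (Hii : forall U : 'M[R]_(T, p),
     LMR L n E r P lam1 lam2 lam3 gam w0h Wh Uh Oh
     <= LMR L n E r P lam1 lam2 lam3 gam w0h Wh U Oh)
  (Hiii : forall m, row m Oh = Theta (row m Wh - row m Uh) (lam3 / lam1) gam) :
  (exists v : 'rV[R]_(T * p),
     v \in subdiff (gvec (p := p) E r) (mxvec Uh) /\
     - lam1 *: Psi Theta Wh Uh (lam3 / lam1) gam + lam2 *: v = 0).
Proof.
pose D := Wh - Uh - Oh.
have PsiD : Psi Theta Wh Uh (lam3 / lam1) gam = mxvec D.
  congr mxvec; apply/matrixP => i j; by rewrite !mxE /psi -Hiii !mxE.
pose Q (U : 'M[R]_(T, p)) := \sum_(m < T) norm2 (row m Wh - row m U - row m Oh) ^+ 2.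
have HQ : forall U, lam1 / 2 * Q Uh + lam2 * gfus E r Uh <= lam1 / 2 * Q U + lam2 * gfus E r U.
  move=> U; have := Hii U; rewrite /LMR /Q; lra.
rewrite PsiD.
have [l20|l2p] := eqVneq lam2 0.
  have D0 : D = 0.
    have := HQ (Wh - Oh); rewrite l20 !mul0r !addr0.
    have -> : Q (Wh - Oh) = 0.
      rewrite /Q big1 // => m _.
      have -> : row m Wh - row m (Wh - Oh) - row m Oh = 0 by apply/rowP => j; rewrite !mxE; ring.
      by rewrite norm2_sq dotv0l.
    rewrite mulr0 pmulr_rle0 ?divr_gt0 // => HQ0.
    have : Q Uh = 0.
      apply/eqP; rewrite eq_le HQ0 /Q; apply: sumr_ge0 => m _; exact: sqr_ge0.
    move/eqP; rewrite /Q psumr_eq0; last by move=> m _; exact: sqr_ge0.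
    move=> /allP H; apply/matrixP => i j.
    have := H i (mem_index_enum i); rewrite /= norm2_sq => /eqP /dotv_eq0 /rowP /(_ j).
    by rewrite !mxE.
  have [V HV] := @subgrad_exists T p E r Uh Hr.
  exists (mxvec V); split; last by rewrite D0 l20 linear0 scaler0 scale0r addr0.
  rewrite inE => y; rewrite /gvec mxvecK -(vec_mxK y) mxvecK -linearB /= dotv_mxvec.
  exact: HV.
have l2 : 0 < lam2 by rewrite lt_def l2p.
exists ((lam1 / lam2) *: mxvec D); split; last first.
  by rewrite scalerA mulrCA mulfV // mulr1 scaleNr addNr.
rewrite inE => y; rewrite /gvec mxvecK -(vec_mxK y) mxvecK -linearB /= dotvZl dotv_mxvec.
set Y := vec_mx y.
pose F := frob D (Y - Uh); pose B := frob (Y - Uh) (Y - Uh).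
have B0 : 0 <= B by apply: sumr_ge0 => m _; exact: dotv_ge0.
have key : lam1 * F <= lam2 * (gfus E r Y - gfus E r Uh).
  apply: (small_t (b := lam1 / 2 * B)); first by apply: mulr_ge0 => //; apply: divr_ge0; lra.
  move=> t /andP[t0 t1].
  have t01 : 0 <= t <= 1 by rewrite (ltW t0) t1.
  have Hc := @gfus_convex T p E r Uh Y t Hr t01.
  have := HQ (Uh + t *: (Y - Uh)).
  have -> : Q (Uh + t *: (Y - Uh)) = Q Uh - 2 * t * F + t ^+ 2 * B.
    have rD : forall m, row m Wh - row m Uh - row m Oh = row m D.
      by move=> m; apply/rowP => j; rewrite !mxE.
    rewrite /Q /F /B /frob.
    under eq_bigr => m _ do rewrite rowWUt quad_exp.
    under [X in _ = X - _ + _]eq_bigr => m _ do rewrite rD.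
    rewrite !mulr_sumr -sumrB -big_split /=; apply: eq_bigr => m _.
    by rewrite norm2_sq.
  move=> HQt.
  have h1 : lam2 * gfus E r (Uh + t *: (Y - Uh)) <=
            lam2 * ((1 - t) * gfus E r Uh + t * gfus E r Y) := ler_wpM2l Hlam2 Hc.
  have h2 : 0 <= t * (lam2 * (gfus E r Y - gfus E r Uh) + t * (lam1 / 2 * B) - lam1 * F).
    have -> : t * (lam2 * (gfus E r Y - gfus E r Uh) + t * (lam1 / 2 * B) - lam1 * F) =
      (lam1 / 2 * (Q Uh - 2 * t * F + t ^+ 2 * B) + lam2 * ((1 - t) * gfus E r Uh + t * gfus E r Y))
      - (lam1 / 2 * Q Uh + lam2 * gfus E r Uh).
      exact: ident1.
    rewrite subr_ge0; apply: le_trans HQt _; lra.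
  move: h2; rewrite pmulr_rge0 //; lra.
have : lam1 / lam2 * F <= gfus E r Y - gfus E r Uh.
  by rewrite mulrAC ler_pdivrMr // [_ * lam2]mulrC.
rewrite /F; lra.
Qed.

Lemma dp (c M : R) : is_derive (0:R) (1:R) (fun t : R => c * t + M * t ^+ 2) c.
Proof.
apply: is_derive_eq.
by rewrite !scale0r addr0 scaler0 addr0 [c%:A]mulr1.
Qed.

Lemma dq (c M t : R) : derivable (fun t : R => c * t + M * t ^+ 2) t 1.
Proof.
apply: (@ex_derive _ _ _ _ _ _ (c + M * (2 * t))). apply: is_derive_eq.
by rewrite [c%:A]mulr1 [t%:A]mulr1 /GRing.scale /= mulr2n mulrDl mul1r.
Qed.
Lemma dg p (f : R * 'rV[R]_p -> R) (x0 h : R * 'rV[R]_p)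
  (df : forall x, differentiable f x) t :
  derivable (fun s : R => f (s *: h + x0)) t 1.
Proof.
apply/derivable1_diffP.
apply: (@differentiable_comp _ _ _ _ (fun s : R => s *: h + x0) f).
  by apply: differentiableD.
exact: df.
Qed.

Lemma dgv p (f : R * 'rV[R]_p -> R) (x0 h : R * 'rV[R]_p)
  (df : forall x, differentiable f x) :
  'D_1 (fun s : R => f (s *: h + x0)) 0 = 'd f x0 h.
Proof.
rewrite -deriveE //.
rewrite /derive; do 2 f_equal; apply: funext => s /=.
by rewrite scale0r add0r addr0 [s%:A]mulr1.
Qed.

Lemma aux1 (A B lam1 dd dh hh t : R) :
  A + lam1 / 2 * dd <= B + lam1 / 2 * (dd - 2 * - t * dh + (- t) ^+ 2 * hh) ->
  A + (lam1 * dh * 0 + lam1 / 2 * hh * 0 ^+ 2) <= B + (lam1 * dh * t + lam1 / 2 * hh * t ^+ 2).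
Proof.
have -> : lam1 / 2 * (dd - 2 * - t * dh + (- t) ^+ 2 * hh) =
   lam1 / 2 * dd + (lam1 * dh * t + lam1 / 2 * hh * t ^+ 2).
  field. by [].
rewrite !mulr0 expr0n /= mulr0 !addr0; lra.
Qed.

Lemma part1 T p (L : 'I_T -> R * 'rV[R]_p -> R) (n : 'I_T -> nat)
  (lam1 : R) (w0h : 'I_T -> R) (Wh Uh Oh : 'M[R]_(T, p))
  (HLdiff : forall m (x : R * 'rV[R]_p), differentiable (L m) x)
  (Hi : forall m (a : R) (w : 'rV[R]_p),
     (n m)%:R^-1 * L m (w0h m, row m Wh)
       + lam1 / 2 * norm2 (row m Wh - row m Uh - row m Oh) ^+ 2
     <= (n m)%:R^-1 * L m (a, w)
       + lam1 / 2 * norm2 (w - row m Uh - row m Oh) ^+ 2) m h :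
  'd (fun x : R * 'rV[R]_p => (n m)%:R^-1 * L m x) (w0h m, row m Wh) h
     + lam1 * (0 * h.1 + dotv (row m Wh - row m Uh - row m Oh) h.2) = 0.
Proof.
set f := fun x : R * 'rV[R]_p => (n m)%:R^-1 * L m x.
set x0 := (w0h m, row m Wh).
set d := row m Wh - row m Uh - row m Oh.
have dfx : forall x, differentiable f x.
  move=> x; exact: (@differentiableM _ _ (cst ((n m)%:R^-1)) (L m)).
pose g := fun s : R => f (s *: h + x0).
pose c := lam1 * dotv d h.2; pose M := lam1 / 2 * dotv h.2 h.2.
pose q := fun t : R => c * t + M * t ^+ 2.
have hmin : forall t, t \in `]-1, 1[ -> (g + q) 0 <= (g + q) t.
  move=> t _; have := Hi m (t *: h + x0).1 (t *: h + x0).2.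
  rewrite -surjective_pairing.
  have -> : (t *: h + x0).2 - row m Uh - row m Oh = d - (- t) *: h.2.
    by apply/rowP => j; rewrite !mxE /=; ring.
  rewrite quad_exp norm2_sq /= => H.
  have E : forall s, (g + q) s = g s + q s by [].
  rewrite !E /g /q scale0r add0r; exact: (aux1 H).
have hd : forall t, t \in `]-1, 1[ -> derivable (g + q) t 1.
  move=> t _; apply: derivableD; first exact: dg.
  exact: dq.
have H01 : (0:R) \in `]-1, 1[ by rewrite in_itv /= ltrN10 ltr01.
have := derive1_at_min (_ : -1 <= 1) hd H01 hmin.
have l : (-1:R) <= 1 by lra.
move=> /(_ l) [_ Hv].
have Dq : 'D_1 q 0 = c by case: (dp c M).
have Dg : 'D_1 g 0 = 'd f x0 h by apply: dgv.
move: Hv; rewrite deriveD; [|exact: dg|exact: dq].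
rewrite Dq Dg /c mul0r add0r => ->; by [].
Qed.
End Aux.

Theorem proposition2 (R : realType) (T p : nat)
  (L : 'I_T -> R * 'rV[R]_p -> R) (n : 'I_T -> nat)
  (E : {set 'I_T * 'I_T}) (r : 'I_T -> 'I_T -> R)
  (P : 'rV[R]_p -> R -> R -> R) (Theta : 'rV[R]_p -> R -> R -> 'rV[R]_p)
  (lam1 lam2 lam3 gam : R)
  (w0h : 'I_T -> R) (Wh Uh Oh : 'M[R]_(T, p))
  (Hn : forall m, (0 < n m)%N)
  (HLdiff : forall m (x : R * 'rV[R]_p), differentiable (L m) x)
  (Hr : forall e, e \in E -> 0 <= r e.1 e.2)
  (Hlam1 : 0 < lam1) (Hlam2 : 0 <= lam2) (Hlam3 : 0 <= lam3)
  (HTheta : forall z o : 'rV[R]_p,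
     1 / 2 * norm2 (z - Theta z (lam3 / lam1) gam) ^+ 2
       + P (Theta z (lam3 / lam1) gam) (lam3 / lam1) gam
     <= 1 / 2 * norm2 (z - o) ^+ 2 + P o (lam3 / lam1) gam)
  (Hi : forall m (a : R) (w : 'rV[R]_p),
     (n m)%:R^-1 * L m (w0h m, row m Wh)
       + lam1 / 2 * norm2 (row m Wh - row m Uh - row m Oh) ^+ 2
     <= (n m)%:R^-1 * L m (a, w)
       + lam1 / 2 * norm2 (w - row m Uh - row m Oh) ^+ 2)
  (Hii : forall U : 'M[R]_(T, p),
     LMR L n E r P lam1 lam2 lam3 gam w0h Wh Uh Oh
     <= LMR L n E r P lam1 lam2 lam3 gam w0h Wh U Oh)
  (Hiii : forall m, row m Oh = Theta (row m Wh - row m Uh) (lam3 / lam1) gam) :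
  (forall m (h : R * 'rV[R]_p),
     'd (fun x : R * 'rV[R]_p => (n m)%:R^-1 * L m x) (w0h m, row m Wh) h
     + lam1 * (0 * h.1 + dotv (psi Theta (row m Wh - row m Uh) (lam3 / lam1) gam) h.2)
     = 0)
  /\
  (exists v : 'rV[R]_(T * p),
     v \in subdiff (gvec (p := p) E r) (mxvec Uh) /\
     - lam1 *: Psi Theta Wh Uh (lam3 / lam1) gam + lam2 *: v = 0).
Proof.
split.
  move=> m h; rewrite /psi -Hiii.
  exact: (part1 HLdiff Hi).
exact: (part2 Hr Hlam1 Hlam2 Hii Hiii).
Qed.
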